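(* Let $r\ge3$, $n>r$. The elements $K_1K_2\cdots K_n-v^r$ and $(K_i-1)(K_i-v)(K_i-v^2)\cdots(K_i-v^r)$ ($1\le i\le n$) of $\mathbf{U}(\widehat{\mathfrak{gl}}_n)$ act as zero on the tensor space $V^{\otimes r}$. Consequently $\widehat{\mathbf{S}}_v(n,r)$ is a quotient of the algebra $T$, via a surjection $\gamma:T\to\widehat{\mathbf{S}}_v(n,r)$ sending each generator to its action on $V^{\otimes r}$.
   Context: $\mathbf{U}(\widehat{\mathfrak{gl}}_n)$ is the $\mathbb{Q}(v)$-algebra with generators $E_i,F_i,K_i^{\pm1}$ ($1\le i\le n$, indices mod $n$) and relations (Q1) $K_iK_j=K_jK_i$; (Q2) $K_iK_i^{-1}=K_i^{-1}K_i=1$; (Q3) $K_iE_j=v^{\epsilon^+(i,j)}E_jK_i$; (Q4) $K_iF_j=v^{-\epsilon^+(i,j)}F_jK_i$, where $\epsilon^+(i,j)=1$ if $j=i$, $-1$ if $j\equiv i-1\pmod n$, $0$ otherwise; (Q5) $E_iF_j-F_jE_i=\delta_{ij}\frac{K_iK_{i+1}^{-1}-K_i^{-1}K_{i+1}}{v-v^{-1}}$; (Q6–Q7) $E_iE_j=E_jE_i$, $F_iF_j=F_jF_i$ if $i-j\not\equiv\pm1$; (Q8–Q9) $E_i^2E_j-(v+v^{-1})E_iE_jE_i+E_jE_i^2=0$, $F_i^2F_j-(v+v^{-1})F_iF_jF_i+F_jF_i^2=0$ if $i-j\equiv\pm1\pmod n$. $T$ is the quotient of $\mathbf{U}(\widehat{\mathfrak{gl}}_n)$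 by the additional relations $K_1\cdots K_n=v^r$ and $\prod_{j=0}^r(K_i-v^j)=0$ for all $i$. $V$ has basis $e_t$ ($t\in\mathbb{Z}$) with $E_ie_{t+1}=e_t$ if $i\equiv t\pmod n$ (else $0$), $F_ie_t=e_{t+1}$ if $i\equiv t$ (else $0$), $K_ie_t=ve_t$ if $i\equiv t$ (else $e_t$); $V^{\otimes r}$ is a module via iterating $\Delta(E_i)=E_i\otimes K_iK_{i+1}^{-1}+1\otimes E_i$, $\Delta(F_i)=K_i^{-1}K_{i+1}\otimes F_i+F_i\otimes1$, $\Delta(K_i^{\pm1})=K_i^{\pm1}\otimes K_i^{\pm1}$. $\widehat{\mathbf{S}}_v(n,r)$ is the image of $\mathbf{U}(\widehat{\mathfrak{gl}}_n)$ in $\operatorname{End}_{\mathbb{Q}(v)}(V^{\otimes r})$. *)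

(* Defs.v *)
From HB Require Import structures.
From mathcomp Require Import all_boot all_order all_algebra.
From mathcomp Require Import fraction.
Set Implicit Arguments. Unset Strict Implicit. Unset Printing Implicit Defensive.
Import Order.TTheory GRing.Theory Num.Theory.
Local Open Scope ring_scope.

Definition Qv : fieldType := {fraction {poly rat}}.
Definition v : Qv := @FracField.tofrac _ 'X.

(* A vector of V^{(x)r}: a finite formal linear combination of basis tensors
   e_{t_1} (x) ... (x) e_{t_r}, the basis tensor being indexed by the
   sequence [:: t_1; ...; t_r] of integers. *)
Definition vec := seq (Qv * seq int).

Definition coef (x : vec) (s : seq int) : Qv :=
  \sum_(p <- x) (if p.2 == s then p.1 else 0).

(* A linear operator, given by the images of the basis tensors. *)
Definition op := seq int -> vec.

Definition scalev (c : Qv) (x : vec) : vec := [seq (c * p.1, p.2) | p <- x].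
Definition applyop (A : op) (x : vec) : vec :=
  flatten [seq scalev p.1 (A p.2) | p <- x].

Definition opid : op := fun s => [:: (1, s)].
Definition op0 : op := fun _ => [::].
Definition opcomp (A B : op) : op := fun s => applyop A (B s).
Definition opadd (A B : op) : op := fun s => A s ++ B s.
Definition opscale (c : Qv) (A : op) : op := fun s => scalev c (A s).
Definition opsub (A B : op) : op := opadd A (opscale (-1) B).
Definition opprod (l : seq op) : op := foldr opcomp opid l.

Definition opeq (r : nat) (A B : op) : Prop :=
  forall t : seq int, size t = r -> forall s, coef (A t) s = coef (B t) s.

Definition congr_mod (n : nat) (t : int) (i : nat) : bool :=
  (n%:Z %| t - i%:Z)%Z.

(* action of K_i, K_i^{-1} on the basis vector e_t of V *)
Definition Kfac (n i : nat) (t : int) : Qv := if congr_mod n t i then v else 1.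
Definition Kifac (n i : nat) (t : int) : Qv := if congr_mod n t i then v^-1 else 1.

(* Actions on V^{(x)r}, obtained by iterating the coproduct
     Delta(E_i) = E_i (x) K_i K_{i+1}^{-1} + 1 (x) E_i,
     Delta(F_i) = K_i^{-1} K_{i+1} (x) F_i + F_i (x) 1,
     Delta(K_i^{+-1}) = K_i^{+-1} (x) K_i^{+-1},
   splitting V^{(x)r} = V (x) V^{(x)(r-1)} along the first tensor factor. *)
Definition Kop (n i : nat) : op := fun s => [:: (\prod_(t <- s) Kfac n i t, s)].
Definition Kiop (n i : nat) : op := fun s => [:: (\prod_(t <- s) Kifac n i t, s)].

(* E_i e_{t+1} = e_t if i == t (mod n), else 0 *)
Fixpoint Eop (n i : nat) (s : seq int) : vec :=
  match s with
  | [::] => [::]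
  | t :: s' =>
      (if congr_mod n (t - 1) i
       then [:: (\prod_(u <- s') (Kfac n i u * Kifac n i.+1 u), (t - 1) :: s')]
       else [::])
      ++ [seq (p.1, t :: p.2) | p <- Eop n i s']
  end.

(* F_i e_t = e_{t+1} if i == t (mod n), else 0 *)
Fixpoint Fop (n i : nat) (s : seq int) : vec :=
  match s with
  | [::] => [::]
  | t :: s' =>
      [seq (Kifac n i t * Kfac n i.+1 t * p.1, t :: p.2) | p <- Fop n i s']
      ++ (if congr_mod n t i then [:: (1, (t + 1) :: s')] else [::])
  end.

(* epsilon^+(i,j) for indices i, j in {0,...,n-1} (index 0 plays the role of n) *)
Definition epsp (n i j : nat) : int :=
  if j == i then 1 else if (j.+1 %% n)%N == i then -1 else 0.

Definition adj (n i j : nat) : bool := (i == (j.+1 %% n)%N) || (j == (i.+1 %% n)%N).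

Definition U_relations_hold (n r : nat) (E F K Ki : nat -> op) : Prop :=
  forall i j : 'I_n,
  opeq r (opcomp (K i) (K j)) (opcomp (K j) (K i)) /\
  opeq r (opcomp (K i) (Ki i)) opid /\
           opeq r (opcomp (Ki i) (K i)) opid /\
  opeq r (opcomp (K i) (E j)) (opscale (v ^ epsp n i j) (opcomp (E j) (K i))) /\
  opeq r (opcomp (K i) (F j)) (opscale (v ^ (- epsp n i j)) (opcomp (F j) (K i))) /\
  opeq r (opsub (opcomp (E i) (F j)) (opcomp (F j) (E i)))
             (if i == j then
                opscale (v - v^-1)^-1
                  (opsub (opcomp (K i) (Ki ((i.+1 %% n)%N)))
                         (opcomp (Ki i) (K ((i.+1 %% n)%N))))
              else op0) /\
           (~~ adj n i j ->
              opeq r (opcomp (E i) (E j)) (opcomp (E j) (E i)) /\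
              opeq r (opcomp (F i) (F j)) (opcomp (F j) (F i))) /\
           (adj n i j ->
              opeq r (opadd (opsub (opprod [:: E i; E i; E j])
                                   (opscale (v + v^-1) (opprod [:: E i; E j; E i])))
                            (opprod [:: E j; E i; E i])) op0 /\
              opeq r (opadd (opsub (opprod [:: F i; F i; F j])
                                   (opscale (v + v^-1) (opprod [:: F i; F j; F i])))
                            (opprod [:: F j; F i; F i])) op0).

Definition T_extra_relations_hold (n r : nat) (K : nat -> op) : Prop :=
  opeq r (opsub (opprod [seq K i | i <- iota 0 n]) (opscale (v ^+ r) opid)) op0 /\
  (forall i : 'I_n,
     opeq r (opprod [seq opsub (K i) (opscale (v ^+ j) opid) | j <- iota 0 r.+1]) op0).

(* Main.v *)
Require Import Defs.
From HB Require Import structures.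
From mathcomp Require Import all_boot all_order all_algebra.
From mathcomp Require Import fraction.
From mathcomp Require Import ring lra zify.
From Stdlib Require Import FunctionalExtensionality.
Set Implicit Arguments. Unset Strict Implicit. Unset Printing Implicit Defensive.
Import Order.TTheory GRing.Theory Num.Theory.
Local Open Scope ring_scope.


Definition cf (A : op) (t s : seq int) : Qv := coef (A t) s.
Definition lin (x : vec) (f : seq int -> Qv) : Qv := \sum_(p <- x) p.1 * f p.2.

Lemma coefv_nil s : coef [::] s = 0.
Proof. by rewrite /coef big_nil. Qed.

Lemma coefv_cons p x s : coef (p :: x) s = (if p.2 == s then p.1 else 0) + coef x s.
Proof. by rewrite /coef big_cons. Qed.

Lemma coefv_cat x y s : coef (x ++ y) s = coef x s + coef y s.
Proof. by rewrite /coef big_cat. Qed.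

Lemma coefv_scalev c x s : coef (scalev c x) s = c * coef x s.
Proof.
elim: x => [|p x IH]; first by rewrite /= !coefv_nil mulr0.
by rewrite /= !coefv_cons IH mulrDr /=; case: ifP; rewrite ?mulr0.
Qed.

Lemma coefv_flatten l s : coef (flatten l) s = \sum_(x <- l) coef x s.
Proof.
elim: l => [|x l IH]; first by rewrite big_nil coefv_nil.
by rewrite /= coefv_cat IH big_cons.
Qed.

Lemma lin_nil f : lin [::] f = 0. Proof. by rewrite /lin big_nil. Qed.
Lemma lin_cons p x f : lin (p :: x) f = p.1 * f p.2 + lin x f.
Proof. by rewrite /lin big_cons. Qed.

Lemma coefv_applyop A x s : coef (applyop A x) s = lin x (fun u => coef (A u) s).
Proof.
elim: x => [|p x IH]; first by rewrite lin_nil /applyop /= coefv_nil.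
by rewrite lin_cons -IH /applyop /= coefv_cat coefv_scalev.
Qed.

Lemma lin_sum x f (S : seq (seq int)) : uniq S -> {subset [seq p.2 | p <- x] <= S} ->
  lin x f = \sum_(u <- S) coef x u * f u.
Proof.
move=> uS; elim: x => [|p x IH] sub.
  by rewrite lin_nil big1 // => u _; rewrite coefv_nil mul0r.
rewrite lin_cons IH; last by move=> u hu; apply: sub; rewrite /= inE hu orbT.
have pS : p.2 \in S by apply: sub; rewrite /= inE eqxx.
under [in RHS]eq_bigr => u _ do rewrite coefv_cons mulrDl.
rewrite big_split /=; congr (_ + _).
rewrite (bigD1_seq p.2) //= eqxx big1 ?addr0 // => u /negbTE hu.
by rewrite eq_sym hu mul0r.
Qed.

Lemma lin_eq x y f : (forall s, coef x s = coef y s) -> lin x f = lin y f.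
Proof.
move=> h.
set S := undup ([seq p.2 | p <- x] ++ [seq p.2 | p <- y]).
have uS : uniq S by rewrite undup_uniq.
rewrite (@lin_sum x f S uS); last by move=> u hu; rewrite mem_undup mem_cat hu.
rewrite (@lin_sum y f S uS); last by move=> u hu; rewrite mem_undup mem_cat hu orbT.
by apply: eq_bigr => u _; rewrite h.
Qed.

Lemma lin_add x f g : lin x (fun u => f u + g u) = lin x f + lin x g.
Proof. by rewrite /lin -big_split; apply: eq_bigr => p _; rewrite mulrDr. Qed.

Lemma lin_scal x c f : lin x (fun u => c * f u) = c * lin x f.
Proof. by rewrite /lin mulr_sumr; apply: eq_bigr => p _; rewrite mulrCA. Qed.

Lemma lin_ext x f g : (forall u, f u = g u) -> lin x f = lin x g.
Proof. by move=> h; apply: eq_bigr => p _; rewrite h. Qed.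

Lemma cf_add A B t s : cf (opadd A B) t s = cf A t s + cf B t s.
Proof. by rewrite /cf /opadd coefv_cat. Qed.
Lemma cf_scale c A t s : cf (opscale c A) t s = c * cf A t s.
Proof. by rewrite /cf /opscale coefv_scalev. Qed.
Lemma cf_comp A B t s : cf (opcomp A B) t s = lin (B t) (fun u => cf A u s).
Proof. by rewrite /cf /opcomp coefv_applyop. Qed.
Lemma cf_op0 t s : cf op0 t s = 0.
Proof. by rewrite /cf coefv_nil. Qed.
Lemma cf_sub A B t s : cf (opsub A B) t s = cf A t s - cf B t s.
Proof. by rewrite /opsub cf_add cf_scale mulN1r. Qed.

Lemma cf_compDl A B C t s :
  cf (opcomp (opadd A B) C) t s = cf (opcomp A C) t s + cf (opcomp B C) t s.
Proof. by rewrite !cf_comp -lin_add; apply: lin_ext => u; rewrite cf_add. Qed.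

Lemma cf_compr_eq X M N t s : (forall w, cf M t w = cf N t w) ->
  cf (opcomp X M) t s = cf (opcomp X N) t s.
Proof. by move=> h; rewrite !cf_comp; apply: lin_eq. Qed.

Lemma scalevA c d x : scalev c (scalev d x) = scalev (c * d) x.
Proof. by elim: x => [|p x IH] //=; rewrite IH mulrA. Qed.

Lemma scalev1 x : scalev 1 x = x.
Proof. by elim: x => [|[a b] x IH] //=; rewrite IH mul1r. Qed.

Lemma scalev_cat c x y : scalev c (x ++ y) = scalev c x ++ scalev c y.
Proof. by rewrite /scalev map_cat. Qed.

Lemma scalev_flatten c l : scalev c (flatten l) = flatten [seq scalev c x | x <- l].
Proof. by elim: l => [|x l IH] //=; rewrite scalev_cat IH. Qed.

Lemma applyop_cons A p x : applyop A (p :: x) = scalev p.1 (A p.2) ++ applyop A x.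
Proof. by []. Qed.

Lemma applyop_cat A x y : applyop A (x ++ y) = applyop A x ++ applyop A y.
Proof. by rewrite /applyop map_cat flatten_cat. Qed.

Lemma applyop_scalev A c x : applyop A (scalev c x) = scalev c (applyop A x).
Proof.
elim: x => [|p x IH] //=.
by rewrite /applyop /= -/(applyop A x) scalev_cat -IH scalevA.
Qed.

Lemma applyop_flatten A l : applyop A (flatten l) = flatten [seq applyop A x | x <- l].
Proof. by elim: l => [|x l IH] //=; rewrite applyop_cat IH. Qed.

Lemma applyop_comp A B x : applyop A (applyop B x) = applyop (opcomp A B) x.
Proof.
elim: x => [|p x IH] //.
by rewrite applyop_cons applyop_cat applyop_scalev IH applyop_cons.
Qed.

Lemma opcompA A B C : opcomp A (opcomp B C) = opcomp (opcomp A B) C.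
Proof. by apply: functional_extensionality => s; rewrite /opcomp applyop_comp. Qed.

Lemma opcomp_id A : opcomp A opid = A.
Proof.
by apply: functional_extensionality => s; rewrite /opcomp /opid /applyop /= cats0 scalev1.
Qed.

Lemma applyop_id x : applyop opid x = x.
Proof. by elim: x => [|[a b] x IH] //=; rewrite /applyop /= -/(applyop opid x) IH mulr1. Qed.

Lemma opid_comp A : opcomp opid A = A.
Proof. by apply: functional_extensionality => s; rewrite /opcomp applyop_id. Qed.

Lemma opcompDr A B C : opcomp A (opadd B C) = opadd (opcomp A B) (opcomp A C).
Proof. by apply: functional_extensionality => s; rewrite /opcomp /opadd applyop_cat. Qed.

Lemma opcompZr A c B : opcomp A (opscale c B) = opscale c (opcomp A B).
Proof. by apply: functional_extensionality => s; rewrite /opcomp /opscale applyop_scalev. Qed.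

Lemma opcompZl c A B : opcomp (opscale c A) B = opscale c (opcomp A B).
Proof.
apply: functional_extensionality => s; rewrite /opcomp /opscale /applyop scalev_flatten -map_comp.
by congr flatten; apply: eq_map => p /=; rewrite /opscale !scalevA mulrC.
Qed.

Lemma opcomp0r A : opcomp A op0 = op0.
Proof. by []. Qed.

Lemma applyop0 x : applyop op0 x = [::].
Proof. by elim: x. Qed.

Lemma opcomp0l A : opcomp op0 A = op0.
Proof. by apply: functional_extensionality => s; rewrite /opcomp applyop0. Qed.

Lemma scale0op c : opscale c op0 = op0. Proof. by []. Qed.
Lemma add0op A : opadd op0 A = A. Proof. by []. Qed.
Lemma addop0 A : opadd A op0 = A.
Proof. by apply: functional_extensionality => s; rewrite /opadd cats0. Qed.


Definition vop := int -> option (Qv * int).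
Definition tens (f : vop) (B : op) : op := fun s =>
  if s is t :: s' then
    (if f t is Some (c, u) then [seq (c * q.1, u :: q.2) | q <- B s'] else [::])
  else [::].
Definition vcomp (f g : vop) : vop := fun t =>
  if g t is Some (c, u) then (if f u is Some (d, w) then Some (c * d, w) else None) else None.
Definition vid : vop := fun t => Some (1, t).
Definition vnone : vop := fun _ => None.
Definition vscale (k : Qv) (f : vop) : vop := fun t =>
  if f t is Some (c, u) then Some (k * c, u) else None.

Lemma flatten_nils (T : Type) (l : seq T) (g : T -> vec) :
  (forall x, g x = [::]) -> flatten [seq g x | x <- l] = [::].
Proof. by move=> h; elim: l => [|x l IH] //=; rewrite h IH. Qed.

Lemma tens_cons f B t s : tens f B (t :: s) =
  if f t is Some (c, u) then [seq (c * q.1, u :: q.2) | q <- B s] else [::].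
Proof. by []. Qed.

Lemma tens_comp f B g C : opcomp (tens f B) (tens g C) = tens (vcomp f g) (opcomp B C).
Proof.
apply: functional_extensionality => [[|t s']]; first by [].
rewrite /opcomp tens_cons tens_cons /vcomp.
case: (g t) => [[c u]|]; last by [].
rewrite /applyop -map_comp /comp /=.
case: (f u) => [[d w]|].
  rewrite map_flatten -map_comp.
  apply: (congr1 flatten); apply: eq_map => q /=.
  rewrite /scalev -!map_comp; apply: eq_map => p /=; congr (_, _); ring.
by rewrite flatten_nils.
Qed.

Lemma tens_add f B C : opadd (tens f B) (tens f C) = tens f (opadd B C).
Proof.
apply: functional_extensionality => [[|t s']] //=.
by rewrite /opadd /=; case: (f t) => [[c u]|] //; rewrite map_cat.
Qed.

Lemma tens_scale f c B : tens f (opscale c B) = opscale c (tens f B).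
Proof.
apply: functional_extensionality => [[|t s']] //=.
rewrite /opscale /=; case: (f t) => [[d u]|] //.
by rewrite /scalev -!map_comp; apply: eq_map => p /=; congr (_, _); ring.
Qed.

Lemma tens_vscale k f B : tens (vscale k f) B = opscale k (tens f B).
Proof.
apply: functional_extensionality => [[|t s']] //=.
rewrite /opscale /vscale /=; case: (f t) => [[d u]|] //.
by rewrite /scalev -!map_comp; apply: eq_map => p /=; congr (_, _); ring.
Qed.

Lemma tens_none B : tens vnone B = op0.
Proof. by apply: functional_extensionality => [[|t s']]. Qed.

Lemma tens_op0 f : tens f op0 = op0.
Proof. by apply: functional_extensionality => [[|t s']] //=; case: (f t) => [[]|]. Qed.

Lemma vcompA f g h : vcomp f (vcomp g h) = vcomp (vcomp f g) h.
Proof.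
apply: functional_extensionality => t; rewrite /vcomp.
case: (h t) => [[c u]|] //; case: (g u) => [[d w]|] //; case: (f w) => [[e z]|] //.
by rewrite mulrA.
Qed.

Lemma vcomp_idl f : vcomp vid f = f.
Proof.
by apply: functional_extensionality => t; rewrite /vcomp /vid; case: (f t) => [[c u]|] //; rewrite mulr1.
Qed.
Lemma vcomp_idr f : vcomp f vid = f.
Proof.
by apply: functional_extensionality => t; rewrite /vcomp /vid; case: (f t) => [[c u]|] //; rewrite mul1r.
Qed.
Lemma vcomp_nonel f : vcomp vnone f = vnone.
Proof. by apply: functional_extensionality => t; rewrite /vcomp; case: (f t) => [[]|]. Qed.
Lemma vcomp_noner f : vcomp f vnone = vnone.
Proof. by []. Qed.

Lemma cf_tens_nil f B s : cf (tens f B) [::] s = 0.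
Proof. by rewrite /cf coefv_nil. Qed.

Lemma coefv_mapcons c x (B : vec) (s : seq int) :
  coef [seq (c * q.1, x :: q.2) | q <- B] s =
  if s is u :: us then (if x == u then c * coef B us else 0) else 0.
Proof.
elim: B s => [|q B IH] s.
  by case: s => [|u us]; rewrite coefv_nil //; case: ifP; rewrite ?coefv_nil ?mulr0.
rewrite /= coefv_cons IH; case: s => [|u us]; first by rewrite addr0.
rewrite eqseq_cons coefv_cons; case: (x == u) => /=; last by rewrite addr0.
by rewrite mulrDr; case: ifP; rewrite ?mulr0.
Qed.

Lemma cf_tens f B t s' s : cf (tens f B) (t :: s') s =
  if f t is Some (c, x) then
    (if s is u :: us then (if x == u then c * cf B s' us else 0) else 0)
  else 0.
Proof.
rewrite /cf /=; case: (f t) => [[c x]|]; last by rewrite coefv_nil.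
by rewrite coefv_mapcons.
Qed.

Definition diag (d : seq int -> Qv) : op := fun s => [:: (d s, s)].

Lemma cf_diag d t s : cf (diag d) t s = if t == s then d t else 0.
Proof. by rewrite /cf /diag coefv_cons coefv_nil addr0. Qed.

Lemma diag_comp d e : opcomp (diag d) (diag e) = diag (fun s => e s * d s).
Proof. by apply: functional_extensionality => s; rewrite /opcomp /diag /applyop /=. Qed.

Lemma opid_diag : opid = diag (fun _ => 1).
Proof. by []. Qed.

Lemma diag_commute d A c : (forall s p, p \in A s -> d p.2 = c * d s) ->
  opcomp (diag d) A = opscale c (opcomp A (diag d)).
Proof.
move=> h; apply: functional_extensionality => s.
rewrite /opcomp /opscale /diag /applyop /= cats0 scalevA.
have : forall p, p \in A s -> d p.2 = c * d s by move=> p; apply: h.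
elim: (A s) => [|p x IH] hp //=.
rewrite IH; last by move=> q hq; apply: hp; rewrite inE hq orbT.
rewrite hp ?inE ?eqxx //=; congr ((_, _) :: _); ring.
Qed.


Lemma congrE n x a : congr_mod n x a = ((x %% n)%Z == ((a %% n)%N)%:Z).
Proof. by rewrite /congr_mod -eqz_mod_dvd modz_nat. Qed.

Lemma congr_m1 n t a : congr_mod n (t - 1) a = congr_mod n t a.+1.
Proof. by rewrite /congr_mod; congr (_ %| _)%Z; lia. Qed.

Lemma congr_p1 n t a : congr_mod n (t + 1) a.+1 = congr_mod n t a.
Proof. by rewrite /congr_mod; congr (_ %| _)%Z; lia. Qed.

Lemma congr_det n t a : congr_mod n t a -> forall b, congr_mod n t b = (a %% n == b %% n)%N.
Proof. by move=> + b; rewrite !congrE => /eqP ->; rewrite eqz_nat. Qed.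

Lemma congr_res n u i : (0 < n)%N -> (i < n)%N ->
  congr_mod n u i = (i == `|(u %% n)%Z|%N)%N.
Proof.
move=> n0 ilt; rewrite congrE modn_small //.
have h : (0 <= (u %% n)%Z)%R by apply: modz_ge0; rewrite eqz_nat -lt0n.
by rewrite -{1}(gez0_abs h) eqz_nat eq_sym.
Qed.

Lemma res_lt n u : (0 < n)%N -> (`|(u %% n)%Z| < n)%N.
Proof.
move=> n0.
have h : (0 <= (u %% n)%Z)%R by apply: modz_ge0; rewrite eqz_nat -lt0n.
have : ((u %% n)%Z < n%:Z)%R by rewrite ltz_mod // eqz_nat -lt0n.
by rewrite -{1}(gez0_abs h) ltz_nat.
Qed.

Lemma v_neq0 : v != 0.
Proof. by rewrite /v tofrac_eq0 polyX_eq0. Qed.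

Lemma v2_neq1 : v ^+ 2 - 1 != 0.
Proof.
rewrite /v -tofracXn -tofrac1 -tofracB tofrac_eq0; apply/eqP => h.
have := congr1 (fun p : {poly rat} => p.[0]) h.
by rewrite /= !hornerE /= => /eqP; rewrite oppr_eq0 oner_eq0.
Qed.

Lemma vmv_neq0 : v - v^-1 != 0.
Proof.
apply/eqP => h; move/eqP: v2_neq1; apply; apply/eqP.
have hv := v_neq0.
have -> : v ^+ 2 - 1 = v * (v - v^-1) by rewrite mulrBr mulfV // expr2.
by rewrite h mulr0.
Qed.


Definition aE n i : vop := fun t => if congr_mod n (t - 1) i then Some (1, t - 1) else None.
Definition Kt n i : op := diag (fun s => \prod_(u <- s) (Kfac n i u * Kifac n i.+1 u)).
Definition DF n i : vop := fun t => Some (Kifac n i t * Kfac n i.+1 t, t).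
Definition cF n i : vop := fun t => if congr_mod n t i then Some (1, t + 1) else None.

Lemma Eop_cons n i t s : Eop n i (t :: s) =
  (if congr_mod n (t - 1) i
   then [:: (\prod_(u <- s) (Kfac n i u * Kifac n i.+1 u), (t - 1) :: s)]
   else [::]) ++ [seq (p.1, t :: p.2) | p <- Eop n i s].
Proof. by []. Qed.

Lemma Fop_cons n i t s : Fop n i (t :: s) =
  [seq (Kifac n i t * Kfac n i.+1 t * p.1, t :: p.2) | p <- Fop n i s]
  ++ (if congr_mod n t i then [:: (1, (t + 1) :: s)] else [::]).
Proof. by []. Qed.

Lemma map_mul1 (x : vec) t : [seq (1 * q.1, t :: q.2) | q <- x] = [seq (q.1, t :: q.2) | q <- x].
Proof. by apply: eq_map => q; rewrite mul1r. Qed.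

Lemma Eop_dec n i : Eop n i = opadd (tens (aE n i) (Kt n i)) (tens vid (Eop n i)).
Proof.
apply: functional_extensionality => [[|t s]] //.
rewrite Eop_cons /opadd !tens_cons /aE /vid map_mul1; congr (_ ++ _).
by case: ifP => //= _; rewrite mul1r.
Qed.

Lemma Fop_dec n i : Fop n i = opadd (tens (DF n i) (Fop n i)) (tens (cF n i) opid).
Proof.
apply: functional_extensionality => [[|t s]] //.
rewrite Fop_cons /opadd !tens_cons /cF /DF; congr (_ ++ _).
by case: ifP => //= _; rewrite mulr1.
Qed.

Lemma Eop_keys n i (f : int -> Qv) rho s p :
  (forall t, congr_mod n (t - 1) i -> f (t - 1) = rho * f t) ->
  p \in Eop n i s -> \prod_(u <- p.2) f u = rho * \prod_(u <- s) f u.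
Proof.
move=> hf; elim: s p => [|t s IH] p //.
rewrite Eop_cons mem_cat => /orP [].
  case: ifP => // hc; rewrite inE => /eqP -> /=.
  by rewrite !big_cons hf // mulrA.
case/mapP => q hq -> /=; rewrite !big_cons IH //; ring.
Qed.

Lemma Fop_keys n i (f : int -> Qv) rho s p :
  (forall t, congr_mod n t i -> f (t + 1) = rho * f t) ->
  p \in Fop n i s -> \prod_(u <- p.2) f u = rho * \prod_(u <- s) f u.
Proof.
move=> hf; elim: s p => [|t s IH] p //.
rewrite Fop_cons mem_cat => /orP [].
  case/mapP => q hq -> /=; rewrite !big_cons IH //; ring.
case: ifP => // hc; rewrite inE => /eqP -> /=.
by rewrite !big_cons hf // mulrA.
Qed.

Lemma diagE_commute n i (f : int -> Qv) rho :
  (forall t, congr_mod n (t - 1) i -> f (t - 1) = rho * f t) ->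
  opcomp (diag (fun s => \prod_(u <- s) f u)) (Eop n i)
  = opscale rho (opcomp (Eop n i) (diag (fun s => \prod_(u <- s) f u))).
Proof. by move=> hf; apply: diag_commute => s p hp; apply: Eop_keys hp. Qed.

Lemma diagF_commute n i (f : int -> Qv) rho :
  (forall t, congr_mod n t i -> f (t + 1) = rho * f t) ->
  opcomp (diag (fun s => \prod_(u <- s) f u)) (Fop n i)
  = opscale rho (opcomp (Fop n i) (diag (fun s => \prod_(u <- s) f u))).
Proof. by move=> hf; apply: diag_commute => s p hp; apply: Fop_keys hp. Qed.

Lemma congr_next n t a : congr_mod n t a -> forall k, congr_mod n (t + 1) k = (a.+1 %% n == k %% n)%N.
Proof. by move=> h k; apply: congr_det; rewrite congr_p1. Qed.

Lemma congr_prev n t a : congr_mod n t a -> forall k, congr_mod n (t - 1) k = (a %% n == k.+1 %% n)%N.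
Proof. by move=> h k; rewrite congr_m1; apply: congr_det. Qed.

Lemma modS_small n k : (k < n)%N -> (k.+1 %% n = if k.+1 == n then 0 else k.+1)%N.
Proof.
move=> hk; case: eqP => [->|h]; first by rewrite modnn.
by rewrite modn_small //; lia.
Qed.

Lemma modSS_small n k : (2 < n)%N -> (k < n)%N ->
  (k.+2 %% n = if k.+2 == n then 0 else if k.+2 == n.+1 then 1 else k.+2)%N.
Proof.
move=> n2 hk; case: eqP => [->|h]; first by rewrite modnn.
case: eqP => [->|h']; last by rewrite modn_small //; lia.
by rewrite -addn1 modnDl modn_small //; lia.
Qed.

Ltac modsimp hyps :=
  repeat first [ rewrite (@modS_small _ _ ltac:(assumption))
               | rewrite (@modn_small _ _ ltac:(assumption)) ].


Definition rhoE n k m : Qv :=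
  (if m == k then v * v else 1) * (if (m %% n == k.+1 %% n)%N then v^-1 else 1)
  * (if (m.+1 %% n == k %% n)%N then v^-1 else 1).
Definition rhoF n k m : Qv :=
  (if m == k then v^-1 * v^-1 else 1) * (if (m %% n == k.+1 %% n)%N then v else 1)
  * (if (m.+1 %% n == k %% n)%N then v else 1).

Ltac vfield := let hv := fresh "hv" in have hv := mulfV v_neq0; ring: hv.

Ltac modsimp2 :=
  repeat match goal with
  | H : is_true (?k < ?n)%N |- context [(?k.+1 %% ?n)%N] => rewrite (@modS_small n k H)
  | H : is_true (?k < ?n)%N |- context [(?k %% ?n)%N] => rewrite (@modn_small k n H)
  end.

Lemma eqmod_small n m k : (m < n)%N -> (k < n)%N -> (m %% n == k %% n)%N = (m == k).
Proof. by move=> hm hk; rewrite !modn_small. Qed.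

Lemma eqmodS n m k : (m < n)%N -> (k < n)%N -> (m.+1 %% n == k.+1 %% n)%N = (m == k).
Proof. by move=> hm hk; rewrite !modS_small //; repeat case: ifP => ?; lia. Qed.

Lemma neqmodS1 n m : (1 < n)%N -> (m < n)%N -> (m %% n == m.+1 %% n)%N = false.
Proof. by move=> n1 hm; rewrite modS_small // modn_small //; case: ifP => ?; lia. Qed.

Lemma neqmodS2 n m : (1 < n)%N -> (m < n)%N -> (m.+1 %% n == m %% n)%N = false.
Proof. by move=> n1 hm; rewrite eq_sym neqmodS1. Qed.

Ltac qsplit n m k hm hk :=
  let n1 := fresh "n1" in let E1 := fresh "E" in let E2 := fresh "E" in
  let E3 := fresh "E" in let E4 := fresh "E" in let E := fresh "E" in
  (have n1 : (1 < n)%N by lia);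
  pose proof (eqmodS hm hk) as E1; pose proof (eqmod_small hm hk) as E2;
  pose proof (neqmodS1 n1 hm) as E3; pose proof (neqmodS2 n1 hm) as E4;
  rewrite ?E1 ?E2; case: (eqVneq m k) => E;
  [ subst k; rewrite ?eqxx ?E3 ?E4 | rewrite ?(negbTE E) ];
  repeat match goal with |- context [if ?b then _ else _] => case: b end;
  rewrite ?mulr1 ?mul1r ?expr1z ?exprN1 ?expr0z ?opprK ?oppr0.

Ltac qcases := vfield.

Lemma Kt_E_comm n k m : (2 < n)%N -> (k < n)%N -> (m < n)%N ->
  opcomp (Kt n k) (Eop n m) = opscale (rhoE n k m) (opcomp (Eop n m) (Kt n k)).
Proof.
move=> n2 hk hm; rewrite /Kt; apply: diagE_commute => t h.
have ht : congr_mod n t m.+1 by rewrite -congr_m1.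
rewrite /Kfac /Kifac /rhoE !(congr_det h) !(congr_det ht).
qsplit n m k hm hk; vfield.
Qed.

Lemma Kt_F_comm n k m : (2 < n)%N -> (k < n)%N -> (m < n)%N ->
  opcomp (Kt n k) (Fop n m) = opscale (rhoF n k m) (opcomp (Fop n m) (Kt n k)).
Proof.
move=> n2 hk hm; rewrite /Kt; apply: diagF_commute => t h.
rewrite /Kfac /Kifac /rhoF !(congr_det h) !(congr_next h).
qsplit n m k hm hk; vfield.
Qed.

Lemma Kop_diag n k : Kop n k = diag (fun s => \prod_(u <- s) Kfac n k u).
Proof. by []. Qed.

Lemma Kop_E_comm n k m : (2 < n)%N -> (k < n)%N -> (m < n)%N ->
  opcomp (Kop n k) (Eop n m) = opscale (v ^ epsp n k m) (opcomp (Eop n m) (Kop n k)).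
Proof.
move=> n2 hk hm; rewrite Kop_diag; apply: diagE_commute => t h.
have ht : congr_mod n t m.+1 by rewrite -congr_m1.
rewrite /Kfac /epsp !(congr_det h) !(congr_det ht).
have ek : (m.+1 %% n == k)%N = (m.+1 %% n == k %% n)%N by rewrite (modn_small hk).
rewrite ek; qsplit n m k hm hk; try vfield.
Qed.

Lemma Kop_F_comm n k m : (2 < n)%N -> (k < n)%N -> (m < n)%N ->
  opcomp (Kop n k) (Fop n m) = opscale (v ^ (- epsp n k m)) (opcomp (Fop n m) (Kop n k)).
Proof.
move=> n2 hk hm; rewrite Kop_diag; apply: diagF_commute => t h.
rewrite /Kfac /epsp !(congr_det h) !(congr_next h).
have ek : (m.+1 %% n == k)%N = (m.+1 %% n == k %% n)%N by rewrite (modn_small hk).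
rewrite ek; qsplit n m k hm hk; try vfield.
Qed.


Definition isdiag (A : op) (d : seq int -> Qv) :=
  forall t s, cf A t s = if t == s then d t else 0.

Lemma isdiag_diag d : isdiag (diag d) d.
Proof. by move=> t s; rewrite cf_diag. Qed.

Lemma isdiag_add A B d e : isdiag A d -> isdiag B e -> isdiag (opadd A B) (fun t => d t + e t).
Proof. by move=> hA hB t s; rewrite cf_add hA hB; case: eqP; rewrite ?addr0. Qed.

Lemma isdiag_scale A d c : isdiag A d -> isdiag (opscale c A) (fun t => c * d t).
Proof. by move=> hA t s; rewrite cf_scale hA; case: eqP; rewrite ?mulr0. Qed.

Lemma isdiag_comp A B d e : isdiag A d -> isdiag B e -> isdiag (opcomp A B) (fun t => e t * d t).
Proof.
move=> hA hB t s; rewrite cf_comp (@lin_eq _ [:: (e t, t)]).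
  by rewrite lin_cons lin_nil addr0 hA; case: eqP; rewrite ?mulr0.
by move=> w; rewrite -/(cf B t w) hB coefv_cons coefv_nil addr0 /= eq_sym.
Qed.

Lemma isdiag_opprod (T : Type) (l : seq T) (X : T -> op) (d : T -> seq int -> Qv) :
  (forall j, isdiag (X j) (d j)) ->
  isdiag (opprod [seq X j | j <- l]) (fun t => \prod_(j <- l) d j t).
Proof.
move=> hX; elim: l => [|j l IH] /=.
  by move=> t s; rewrite /opprod /= opid_diag cf_diag big_nil.
rewrite /opprod /= -/(opprod _) => t s.
rewrite (isdiag_comp (hX j) IH) big_cons mulrC.
done.
Qed.

Lemma opeq_isdiag r A d : isdiag A d -> (forall t, size t = r -> d t = 0) -> opeq r A op0.
Proof.
move=> hA hd t ht s; rewrite -/(cf A t s) hA hd // -/(cf op0 t s) cf_op0.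
by case: eqP.
Qed.

Lemma prod_const_v (t : seq int) : \prod_(u <- t) v = v ^+ size t.
Proof. by elim: t => [|u t IH]; rewrite ?big_nil ?big_cons ?IH ?exprS. Qed.

Lemma prod_Kfac_count n i (t : seq int) :
  \prod_(u <- t) Kfac n i u = v ^+ count (fun u => congr_mod n u i) t.
Proof.
elim: t => [|u t IH]; rewrite ?big_nil ?big_cons ?IH //=.
by rewrite /Kfac; case: ifP => _; rewrite ?mul1r ?add0n // exprS.
Qed.

Lemma prod_Kfac_all n u : (0 < n)%N -> \prod_(i <- iota 0 n) Kfac n i u = v.
Proof.
move=> n0; set ru := `|(u %% n)%Z|%N.
have hru : (ru < n)%N by apply: res_lt.
rewrite (bigD1_seq ru) ?iota_uniq ?mem_iota //=.
rewrite /Kfac (congr_res _ n0 hru) eqxx big1_seq ?mulr1 // => i /andP [hi].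
rewrite mem_iota /= add0n => hin.
by rewrite (congr_res _ n0 hin) (negbTE hi).
Qed.

Lemma Kop_isdiag n i : isdiag (Kop n i) (fun s => \prod_(u <- s) Kfac n i u).
Proof. exact: isdiag_diag. Qed.

Lemma extra_rel1 n r : (0 < n)%N ->
  opeq r (opsub (opprod [seq Kop n i | i <- iota 0 n]) (opscale (v ^+ r) opid)) op0.
Proof.
move=> n0; apply: (@opeq_isdiag _ _ (fun t => \prod_(i <- iota 0 n) \prod_(u <- t) Kfac n i u
     + - 1 * (v ^+ r * 1))).
  apply: isdiag_add; last by apply: isdiag_scale; apply: isdiag_scale; exact: isdiag_diag.
  exact: (isdiag_opprod _ (fun i => Kop_isdiag n i)).
move=> t ht; rewrite exchange_big /=.
under eq_bigr => u _ do rewrite prod_Kfac_all //.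
by rewrite prod_const_v ht mulr1 mulN1r subrr.
Qed.

Lemma extra_rel2 n r (i : 'I_n) :
  opeq r (opprod [seq opsub (Kop n i) (opscale (v ^+ j) opid) | j <- iota 0 r.+1]) op0.
Proof.
apply: (@opeq_isdiag _ _ (fun t => \prod_(j <- iota 0 r.+1)
     (\prod_(u <- t) Kfac n i u + - 1 * (v ^+ j * 1)))).
  apply: (isdiag_opprod _ (fun j => _)) => j.
  apply: isdiag_add; first exact: Kop_isdiag.
  by apply: isdiag_scale; apply: isdiag_scale; exact: isdiag_diag.
move=> t ht; set c := count (fun u => congr_mod n u i) t.
have hc : (c < r.+1)%N by rewrite ltnS -ht count_size.
rewrite (bigD1_seq c) ?iota_uniq ?mem_iota //=.
by rewrite prod_Kfac_count mulr1 mulN1r subrr mul0r.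
Qed.

Lemma Q1 n (i j : nat) : opcomp (Kop n i) (Kop n j) = opcomp (Kop n j) (Kop n i).
Proof. by rewrite !Kop_diag !diag_comp; congr diag; apply: functional_extensionality => s; rewrite mulrC. Qed.

Lemma Kiop_diag n k : Kiop n k = diag (fun s => \prod_(u <- s) Kifac n k u).
Proof. by []. Qed.

Lemma Q2a n i : opcomp (Kop n i) (Kiop n i) = opid.
Proof.
rewrite Kop_diag Kiop_diag diag_comp opid_diag; congr diag.
apply: functional_extensionality => s; rewrite -big_split /=.
by apply: big1 => u _; rewrite /Kfac /Kifac; case: ifP; rewrite ?mulr1 // mulVf // v_neq0.
Qed.

Lemma Q2b n i : opcomp (Kiop n i) (Kop n i) = opid.
Proof.
rewrite Kop_diag Kiop_diag diag_comp opid_diag; congr diag.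
apply: functional_extensionality => s; rewrite -big_split /=.
by apply: big1 => u _; rewrite /Kfac /Kifac; case: ifP; rewrite ?mulr1 // mulfV // v_neq0.
Qed.


Lemma cfD1 X Y1 Y2 Z t s :
  cf (opcomp X (opcomp (opadd Y1 Y2) Z)) t s =
  cf (opcomp X (opcomp Y1 Z)) t s + cf (opcomp X (opcomp Y2 Z)) t s.
Proof.
rewrite (@cf_compr_eq X _ (opadd (opcomp Y1 Z) (opcomp Y2 Z))).
  by rewrite opcompDr cf_add.
by move=> w; rewrite cf_compDl cf_add.
Qed.

Ltac expand := repeat first [ rewrite opcompDr | rewrite opcompZr | rewrite opcompZl
  | rewrite cf_add | rewrite cf_scale | rewrite cf_compDl | rewrite cfD1 ].

Lemma cf_tens_vid B t s' s : cf (tens vid B) (t :: s') s =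
  if s is u :: us then (if t == u then cf B s' us else 0) else 0.
Proof. by rewrite cf_tens /vid; case: s => [|u us] //; case: eqP; rewrite ?mul1r. Qed.

Lemma cf_nil_E n i A s : cf (opcomp A (Eop n i)) [::] s = 0.
Proof. by rewrite /cf /opcomp /= coefv_nil. Qed.
Lemma cf_nil_F n i A s : cf (opcomp A (Fop n i)) [::] s = 0.
Proof. by rewrite /cf /opcomp /= coefv_nil. Qed.

Lemma aE_aE n i : (1 < n)%N -> (i < n)%N -> vcomp (aE n i) (aE n i) = vnone.
Proof.
move=> n1 hi; apply: functional_extensionality => t; rewrite /vcomp /aE.
case: ifP => // h; rewrite (congr_prev h) (neqmodS1 n1 hi) //.
Qed.

Lemma nonadj_mod n i j : (i < n)%N -> (j < n)%N -> ~~ adj n i j ->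
  (j %% n == i.+1 %% n)%N = false /\ (i %% n == j.+1 %% n)%N = false.
Proof.
move=> hi hj; rewrite /adj negb_or => /andP [h1 h2].
by rewrite (modn_small hi) (modn_small hj); split; apply/negbTE.
Qed.

Lemma aE_aE_nonadj n i j : (i < n)%N -> (j < n)%N -> ~~ adj n i j ->
  vcomp (aE n i) (aE n j) = vnone.
Proof.
move=> hi hj ha; apply: functional_extensionality => t; rewrite /vcomp /aE.
case: ifP => // h; rewrite (congr_prev h).
by have [-> _] := nonadj_mod hi hj ha.
Qed.

Lemma rhoE_nonadj n i j : (i < n)%N -> (j < n)%N -> i != j -> ~~ adj n i j ->
  rhoE n i j = 1.
Proof.
move=> hi hj hij ha; rewrite /rhoE eq_sym (negbTE hij).
have [h1 h2] := nonadj_mod hi hj ha.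
have hji : ~~ adj n j i by rewrite /adj orbC.
have [h3 h4] := nonadj_mod hj hi hji.
by rewrite h1 eq_sym h3 !mulr1.
Qed.

Lemma Kt_comm n i j : opcomp (Kt n i) (Kt n j) = opcomp (Kt n j) (Kt n i).
Proof. by rewrite /Kt !diag_comp; congr diag; apply: functional_extensionality => s; rewrite mulrC. Qed.

Lemma comm_nested A B X c : opcomp A B = opscale c (opcomp B A) ->
  opcomp A (opcomp B X) = opscale c (opcomp B (opcomp A X)).
Proof. by move=> h; rewrite opcompA h opcompZl -opcompA. Qed.

Lemma Q6E n i j : (2 < n)%N -> (i < n)%N -> (j < n)%N -> i != j -> ~~ adj n i j ->
  forall t s, cf (opcomp (Eop n i) (Eop n j)) t s = cf (opcomp (Eop n j) (Eop n i)) t s.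
Proof.
move=> n2 hi hj hij ha; elim => [|t s' IH] s; first by rewrite !cf_nil_E.
have haji : ~~ adj n j i by rewrite /adj orbC.
rewrite [Eop n i]Eop_dec [Eop n j]Eop_dec; expand.
rewrite !tens_comp !vcomp_idl !vcomp_idr (aE_aE_nonadj hi hj ha) (aE_aE_nonadj hj hi haji).
rewrite !tens_none !cf_op0.
rewrite (Kt_E_comm n2 hi hj) (Kt_E_comm n2 hj hi) (rhoE_nonadj hi hj hij ha).
rewrite (rhoE_nonadj hj hi _ haji); last by rewrite eq_sym.
rewrite !tens_scale !cf_scale !mul1r !cf_tens_vid.
case: s => [|u us]; first by ring.
case: eqP => _; rewrite ?IH; ring.
Qed.

Lemma cf_tens_congr w X Y t s' s : (forall u, cf X s' u = cf Y s' u) ->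
  cf (tens w X) (t :: s') s = cf (tens w Y) (t :: s') s.
Proof. by move=> h; rewrite !cf_tens; case: (w t) => [[c x]|] //; case: s => [|u us] //; rewrite h. Qed.

Definition dFn n k m : Qv := (if (m.+1 %% n == k %% n)%N then v^-1 else 1) * (if m == k then v else 1).
Definition dFc n k m : Qv := (if m == k then v^-1 else 1) * (if (m %% n == k.+1 %% n)%N then v else 1).

Lemma DF_cF n k m : (k < n)%N -> (m < n)%N ->
  vcomp (DF n k) (cF n m) = vscale (dFn n k m) (cF n m).
Proof.
move=> hk hm; apply: functional_extensionality => t; rewrite /vcomp /vscale /cF /DF.
case: ifP => // h; rewrite /Kfac /Kifac !(congr_next h) (eqmodS hm hk) mul1r mulr1 /dFn.
done.
Qed.

Lemma cF_DF n k m : (k < n)%N -> (m < n)%N ->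
  vcomp (cF n m) (DF n k) = vscale (dFc n k m) (cF n m).
Proof.
move=> hk hm; apply: functional_extensionality => t; rewrite /vcomp /vscale /cF /DF.
case: ifP => // h; rewrite /Kfac /Kifac !(congr_det h) (eqmod_small hm hk) mulr1 /dFc.
done.
Qed.

Lemma DF_comm n i j : vcomp (DF n i) (DF n j) = vcomp (DF n j) (DF n i).
Proof. by apply: functional_extensionality => t; rewrite /vcomp /DF mulrC. Qed.

Lemma cF_cF_nonadj n i j : (i < n)%N -> (j < n)%N -> ~~ adj n i j ->
  vcomp (cF n i) (cF n j) = vnone.
Proof.
move=> hi hj ha; apply: functional_extensionality => t; rewrite /vcomp /cF.
case: ifP => // h; rewrite (congr_next h).
by have [_ h2] := nonadj_mod hi hj ha; rewrite eq_sym h2.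
Qed.

Lemma dF_nonadj n k m : (k < n)%N -> (m < n)%N -> k != m -> ~~ adj n k m ->
  dFn n k m = 1 /\ dFc n k m = 1.
Proof.
move=> hk hm hkm ha; rewrite /dFn /dFc [m == k]eq_sym (negbTE hkm).
have [h1 h2] := nonadj_mod hk hm ha.
by rewrite eq_sym h2 h1 !mulr1.
Qed.

Lemma Q7F n i j : (2 < n)%N -> (i < n)%N -> (j < n)%N -> i != j -> ~~ adj n i j ->
  forall t s, cf (opcomp (Fop n i) (Fop n j)) t s = cf (opcomp (Fop n j) (Fop n i)) t s.
Proof.
move=> n2 hi hj hij ha; elim => [|t s' IH] s; first by rewrite !cf_nil_F.
have haji : ~~ adj n j i by rewrite /adj orbC.
have hji : j != i by rewrite eq_sym.
rewrite [Fop n i]Fop_dec [Fop n j]Fop_dec; expand.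
rewrite !tens_comp !opcomp_id !opid_comp (DF_comm n j i).
rewrite (cF_cF_nonadj hi hj ha) (cF_cF_nonadj hj hi haji) !tens_none !cf_op0.
rewrite (DF_cF hi hj) (DF_cF hj hi) (cF_DF hi hj) (cF_DF hj hi).
have [e1 e2] := dF_nonadj hi hj hij ha; have [e3 e4] := dF_nonadj hj hi hji haji.
rewrite e1 e2 e3 e4 !tens_vscale !cf_scale !mul1r.
rewrite (@cf_tens_congr _ _ _ _ _ _ IH); ring.
Qed.


Definition Pv n i : vop := fun t => if congr_mod n t i then Some (1, t) else None.

Lemma aE_DF n i j : (i < n)%N -> (j < n)%N ->
  vcomp (aE n i) (DF n j) = vscale (dFn n j i) (aE n i).
Proof.
move=> hi hj; apply: functional_extensionality => t; rewrite /vcomp /vscale /aE /DF.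
case: ifP => // h; have ht : congr_mod n t i.+1 by rewrite -congr_m1.
by rewrite /Kfac /Kifac !(congr_det ht) (eqmodS hi hj) mulr1 /dFn.
Qed.

Lemma DF_aE n i j : (i < n)%N -> (j < n)%N ->
  vcomp (DF n j) (aE n i) = vscale (dFc n j i) (aE n i).
Proof.
move=> hi hj; apply: functional_extensionality => t; rewrite /vcomp /vscale /aE /DF.
case: ifP => // h.
by rewrite /Kfac /Kifac !(congr_det h) (eqmod_small hi hj) mul1r mulr1 /dFc.
Qed.

Lemma rho_dF n i j : (2 < n)%N -> (i < n)%N -> (j < n)%N ->
  dFn n j i * rhoF n i j = dFc n j i.
Proof.
move=> n2 hi hj; have n1 : (1 < n)%N by lia.
rewrite /dFn /rhoF /dFc [(j %% n == _)%N]eq_sym [(j.+1 %% n == _)%N]eq_sym.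
case: (eqVneq i j) => [<-|hij].
  by rewrite ?eqxx ?(neqmodS1 n1 hi) ?(neqmodS2 n1 hi); vfield.
case: (i.+1 %% n == j %% n)%N; case: (i %% n == j.+1 %% n)%N; vfield.
Qed.

Lemma aE_cF_neq n i j : (i < n)%N -> (j < n)%N -> i != j ->
  vcomp (aE n i) (cF n j) = vnone.
Proof.
move=> hi hj hij; apply: functional_extensionality => t; rewrite /vcomp /aE /cF.
case: ifP => // h; rewrite -addrA subrr addr0 (congr_det h) (eqmod_small hj hi).
by rewrite eq_sym (negbTE hij).
Qed.

Lemma cF_aE_neq n i j : (i < n)%N -> (j < n)%N -> i != j ->
  vcomp (cF n j) (aE n i) = vnone.
Proof.
move=> hi hj hij; apply: functional_extensionality => t; rewrite /vcomp /aE /cF.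
case: ifP => // h; rewrite (congr_det h) (eqmod_small hi hj).
by rewrite (negbTE hij).
Qed.

Lemma aE_cF_eq n i : vcomp (aE n i) (cF n i) = Pv n i.
Proof.
apply: functional_extensionality => t; rewrite /vcomp /aE /cF /Pv.
case: ifP => h; last by [].
by rewrite -addrA subrr addr0 h mulr1.
Qed.

Lemma cF_aE_eq n i : vcomp (cF n i) (aE n i) = Pv n i.+1.
Proof.
apply: functional_extensionality => t; rewrite /vcomp /aE /cF /Pv congr_m1.
case: ifP => h; last by [].
by rewrite congr_m1 h subrK mulr1.
Qed.

Lemma cf_tens_sub w X Y t s : cf (tens w (opsub X Y)) t s = cf (tens w X) t s - cf (tens w Y) t s.
Proof. by rewrite /opsub -tens_add tens_scale cf_add cf_scale mulN1r. Qed.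

Lemma congr_modn n u a : congr_mod n u (a %% n) = congr_mod n u a.
Proof. by rewrite !congrE modn_mod. Qed.


Definition Q5rhs n i j : op :=
  if i == j then opscale (v - v^-1)^-1
     (opsub (opcomp (Kop n i) (Kiop n (i.+1 %% n))) (opcomp (Kiop n i) (Kop n (i.+1 %% n))))
  else op0.

Lemma Q5gen n i j : (2 < n)%N -> (i < n)%N -> (j < n)%N ->
  forall t s, cf (opsub (opcomp (Eop n i) (Fop n j)) (opcomp (Fop n j) (Eop n i))) t s
            = cf (Q5rhs n i j) t s.
Proof.
move=> n2 hi hj; elim => [|t s' IH] s.
  rewrite cf_sub !cf_nil_E cf_nil_F subrr /Q5rhs; case: ifP => _; last by rewrite cf_op0.
  rewrite cf_scale cf_sub /cf /opcomp /applyop /= !big_nil.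
  by rewrite !coefv_cons !coefv_nil /= !mulr1 subrr mulr0.
rewrite /opsub [Eop n i]Eop_dec [Fop n j]Fop_dec; expand.
rewrite !tens_comp !opcomp_id !opid_comp !vcomp_idl !vcomp_idr.
rewrite (aE_DF hi hj) (DF_aE hi hj) (Kt_F_comm n2 hi hj) !tens_scale !tens_vscale !cf_scale.
rewrite -(rho_dF n2 hi hj).
have hD := cf_tens_sub (DF n j) (opcomp (Eop n i) (Fop n j)) (opcomp (Fop n j) (Eop n i)) (t :: s') s.
rewrite (cf_tens_congr _ _ _ IH) in hD.
have -> : cf (tens (DF n j) (opcomp (Eop n i) (Fop n j))) (t :: s') s =
   cf (tens (DF n j) (opcomp (Fop n j) (Eop n i))) (t :: s') s + cf (tens (DF n j) (Q5rhs n i j)) (t :: s') s.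
  by rewrite hD; ring.
case: (eqVneq i j) => [<-|hij].
  rewrite aE_cF_eq cF_aE_eq.
  suff -> : cf (tens (DF n i) (Q5rhs n i i)) (t :: s') s =
    cf (Q5rhs n i i) (t :: s') s - cf (tens (Pv n i) (Kt n i)) (t :: s') s
    + cf (tens (Pv n i.+1) (Kt n i)) (t :: s') s by ring.
  have hq : isdiag (Q5rhs n i i) (fun s => (v - v^-1)^-1 *
     (\prod_(u <- s) Kifac n (i.+1 %% n) u * \prod_(u <- s) Kfac n i u +
      -1 * (\prod_(u <- s) Kfac n (i.+1 %% n) u * \prod_(u <- s) Kifac n i u))).
    rewrite /Q5rhs eqxx; apply: isdiag_scale; apply: isdiag_add;
      [apply: isdiag_comp | apply: isdiag_scale; apply: isdiag_comp]; exact: isdiag_diag.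
  rewrite !cf_tens !hq /Pv /DF /Kt; clear hD.
  case: s => [|u us] /=.
    by case: (congr_mod n t i); case: (congr_mod n t i.+1) => /=; ring.
  rewrite !cf_diag eqseq_cons.
  case: (eqVneq t u) => [<-|htu] /=; last first.
    by case: (congr_mod n t i); case: (congr_mod n t i.+1) => /=; rewrite ?(negbTE htu); ring.
  rewrite ?eqxx /=; case: (s' =P us) => [<-|hs] /=; last first.
    by rewrite hq; case: eqP => // _; case: (congr_mod n t i); case: (congr_mod n t i.+1) => /=; rewrite ?eqxx; ring.
  have Kfm : Kfac n (i.+1 %% n) = Kfac n i.+1.
    by apply: functional_extensionality => x; rewrite /Kfac congr_modn.
  have Kifm : Kifac n (i.+1 %% n) = Kifac n i.+1.
    by apply: functional_extensionality => x; rewrite /Kifac congr_modn.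
  rewrite hq !eqxx /= !big_cons Kfm Kifm big_split /=.
  set A := \prod_(_ <- s') Kfac n i _.
  set B := \prod_(_ <- s') Kifac n i.+1 _.
  set C := \prod_(_ <- s') Kfac n i.+1 _.
  set D := \prod_(_ <- s') Kifac n i _.
  have hv := mulfV v_neq0; have hc := mulfV vmv_neq0.
  rewrite /Kfac /Kifac.
  case h1 : (congr_mod n t i); case h2 : (congr_mod n t i.+1) => /=.
  - have n1 : (1 < n)%N by lia.
    by move: h2; rewrite (congr_det h1) (neqmodS1 n1 hi).
  - rewrite ?eqxx; move: hv hc; set c := (v - v^-1)^-1; set w := v^-1.
    clearbody A B C D c w => hv hc.
    have hc2 : v * c = 1 + w * c by rewrite -hc; ring.
    ring: hc2.
  - rewrite ?eqxx; move: hv hc; set c := (v - v^-1)^-1; set w := v^-1.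
    clearbody A B C D c w => hv hc.
    have hc2 : v * c = 1 + w * c by rewrite -hc; ring.
    ring: hc2.
  - rewrite ?eqxx; move: hv hc; set c := (v - v^-1)^-1; set w := v^-1.
    clearbody A B C D c w => hv hc.
    have hc2 : v * c = 1 + w * c by rewrite -hc; ring.
    ring: hc2.
rewrite (aE_cF_neq hi hj hij) (cF_aE_neq hi hj hij) !tens_none /Q5rhs (negbTE hij) tens_op0 !cf_op0.
ring.
Qed.


Definition SerreOp (X Y : op) : op :=
  opadd (opsub (opprod [:: X; X; Y]) (opscale (v + v^-1) (opprod [:: X; Y; X])))
        (opprod [:: Y; X; X]).

Lemma adj_cases n i j : (2 < n)%N -> (i < n)%N -> (j < n)%N -> adj n i j ->
  ((i %% n == j.+1 %% n)%N && ~~ (j %% n == i.+1 %% n)%N) ||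
  ((j %% n == i.+1 %% n)%N && ~~ (i %% n == j.+1 %% n)%N).
Proof.
move=> n2 hi hj; rewrite /adj (modn_small hi) (modn_small hj).
rewrite !modS_small //; repeat case: ifP => ?; lia.
Qed.

Lemma rhoE_ii n i : (2 < n)%N -> (i < n)%N -> rhoE n i i = v * v.
Proof.
move=> n2 hi; have n1 : (1 < n)%N by lia.
by rewrite /rhoE eqxx (neqmodS1 n1 hi) (neqmodS2 n1 hi) !mulr1.
Qed.

Lemma rhoE_adj n i j : (2 < n)%N -> (i < n)%N -> (j < n)%N -> adj n i j ->
  rhoE n i j = v^-1.
Proof.
move=> n2 hi hj ha; rewrite /rhoE.
have hij : (j == i) = false.
  by apply/negbTE; apply/eqP => e; move: ha; rewrite /adj e !modS_small //; case: ifP => ?; lia.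
rewrite hij [(j.+1 %% n == _)%N]eq_sym.
by case/orP: (adj_cases n2 hi hj ha) => /andP [-> /negbTE ->]; rewrite ?mulr1 ?mul1r.
Qed.

Lemma adj_sym n i j : adj n i j -> adj n j i.
Proof. by rewrite /adj orbC. Qed.

Lemma aE_aba n i j : (2 < n)%N -> (i < n)%N -> (j < n)%N -> adj n i j ->
  vcomp (vcomp (aE n i) (aE n j)) (aE n i) = vnone.
Proof.
move=> n2 hi hj ha; apply: functional_extensionality => t; rewrite /vcomp /aE.
case: ifP => // h1; rewrite (congr_prev h1); case: ifP => // h2.
have h2' : congr_mod n (t - 1 - 1) j by rewrite (congr_prev h1) h2.
rewrite (congr_prev h2').
have := adj_cases n2 hi hj ha; rewrite h2 /= andbF orbF => /negbTE ->.
by [].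
Qed.

Lemma opprod3 A B C : opprod [:: A; B; C] = opcomp A (opcomp B C).
Proof. by rewrite /opprod /= opcomp_id. Qed.

Lemma aE_aE_l n i X : (1 < n)%N -> (i < n)%N -> vcomp (vcomp X (aE n i)) (aE n i) = vnone.
Proof. by move=> n1 hi; rewrite -vcompA (aE_aE n1 hi). Qed.

Lemma comm_nested1 A B X : opcomp A B = opcomp B A ->
  opcomp A (opcomp B X) = opcomp B (opcomp A X).
Proof. by move=> h; rewrite opcompA h -opcompA. Qed.

Lemma SerreOp_nilE n i j s : cf (SerreOp (Eop n i) (Eop n j)) [::] s = 0.
Proof. by rewrite /SerreOp /opsub !opprod3 /cf /opadd /opscale /opcomp /= coefv_nil. Qed.
Lemma SerreOp_nilF n i j s : cf (SerreOp (Fop n i) (Fop n j)) [::] s = 0.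
Proof. by rewrite /SerreOp /opsub !opprod3 /cf /opadd /opscale /opcomp /= coefv_nil. Qed.

Opaque opscale opcomp opadd op0 tens Kt Eop Fop.

Lemma SerreE n i j : (2 < n)%N -> (i < n)%N -> (j < n)%N -> adj n i j ->
  forall t s, cf (SerreOp (Eop n i) (Eop n j)) t s = 0.
Proof.
move=> n2 hi hj ha; have n1 : (1 < n)%N by lia.
have hji := adj_sym ha.
elim => [|t s' IH] s.
  by apply: SerreOp_nilE.
suff -> : cf (SerreOp (Eop n i) (Eop n j)) (t :: s') s =
          cf (tens vid (SerreOp (Eop n i) (Eop n j))) (t :: s') s.
  by rewrite cf_tens_vid; case: s => [|u us] //; case: eqP => _ //; rewrite IH.
set R := cf (tens vid _) _ _.
rewrite /SerreOp /opsub !opprod3.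
rewrite [Eop n i]Eop_dec [Eop n j]Eop_dec; expand.
rewrite !tens_comp !vcomp_idl !vcomp_idr !vcompA (aE_aE n1 hi) (aE_aba n2 hi hj ha).
rewrite ?(aE_aE_l _ n1 hi) ?vcomp_nonel ?vcomp_noner !tens_none !cf_op0.
have c1 := Kt_E_comm n2 hi hi; have c2 := Kt_E_comm n2 hi hj.
have c3 := Kt_E_comm n2 hj hi; have c4 := Kt_E_comm n2 hj hj.
have c5 := Kt_comm n j i.
repeat first [ rewrite (comm_nested _ c1) | rewrite (comm_nested _ c2) | rewrite (comm_nested _ c3)
             | rewrite (comm_nested _ c4) | rewrite (comm_nested1 _ c5)
             | rewrite c1 | rewrite c2 | rewrite c3 | rewrite c4 | rewrite c5
             | rewrite opcompZr | rewrite opcompZl ].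
repeat erewrite tens_scale; repeat erewrite cf_scale.
rewrite (rhoE_ii n2 hi) (rhoE_adj n2 hi hj ha) (rhoE_adj n2 hj hi hji).
rewrite /R /SerreOp /opsub !opprod3.
repeat erewrite <- tens_add; repeat erewrite tens_scale; repeat erewrite cf_add;
  repeat erewrite cf_scale.
have hv := mulfV v_neq0.
ring: hv.
Qed.


Lemma vcomp_vscale_l a f g : vcomp (vscale a f) g = vscale a (vcomp f g).
Proof.
apply: functional_extensionality => t; rewrite /vcomp /vscale.
case: (g t) => [[c u]|] //; case: (f u) => [[d w]|] //; by rewrite mulrCA.
Qed.

Lemma vcomp_vscale_r a f g : vcomp f (vscale a g) = vscale a (vcomp f g).
Proof.
apply: functional_extensionality => t; rewrite /vcomp /vscale.
case: (g t) => [[c u]|] //; case: (f u) => [[d w]|] //; by rewrite mulrA.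
Qed.

Lemma vscale_vscale a b f : vscale a (vscale b f) = vscale (a * b) f.
Proof.
apply: functional_extensionality => t; rewrite /vscale.
by case: (f t) => [[c u]|] //; rewrite mulrA.
Qed.

Lemma vscale_none a : vscale a vnone = vnone.
Proof. by []. Qed.

Lemma cF_DF_l n k m X : (k < n)%N -> (m < n)%N ->
  vcomp (vcomp X (cF n m)) (DF n k) = vscale (dFc n k m) (vcomp X (cF n m)).
Proof. by move=> hk hm; rewrite -vcompA (cF_DF hk hm) vcomp_vscale_r. Qed.

Lemma DF_cF_l n k m X : (k < n)%N -> (m < n)%N ->
  vcomp (vcomp X (DF n k)) (cF n m) = vscale (dFn n k m) (vcomp X (cF n m)).
Proof. by move=> hk hm; rewrite -vcompA (DF_cF hk hm) vcomp_vscale_r. Qed.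

Lemma cF_cF n i : (1 < n)%N -> (i < n)%N -> vcomp (cF n i) (cF n i) = vnone.
Proof.
move=> n1 hi; apply: functional_extensionality => t; rewrite /vcomp /cF.
by case: ifP => // h; rewrite (congr_next h) (neqmodS2 n1 hi).
Qed.

Lemma cF_cF_l n i X : (1 < n)%N -> (i < n)%N -> vcomp (vcomp X (cF n i)) (cF n i) = vnone.
Proof. by move=> n1 hi; rewrite -vcompA (cF_cF n1 hi). Qed.

Lemma cF_cF_dir n i j : (i < n)%N -> (j < n)%N -> ~~ (i %% n == j.+1 %% n)%N ->
  vcomp (cF n i) (cF n j) = vnone.
Proof.
move=> hi hj hn; apply: functional_extensionality => t; rewrite /vcomp /cF.
by case: ifP => // h; rewrite (congr_next h) eq_sym (negbTE hn).
Qed.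

Lemma cF_cFcF n i j : (2 < n)%N -> (i < n)%N -> (j < n)%N -> adj n i j ->
  vcomp (vcomp (cF n i) (cF n j)) (cF n i) = vnone.
Proof.
move=> n2 hi hj ha; apply: functional_extensionality => t; rewrite /vcomp /cF.
case: ifP => // h1; rewrite (congr_next h1); case: ifP => // h2.
have h2' : congr_mod n (t + 1) j by rewrite (congr_next h1).
have hB : (j %% n == i.+1 %% n)%N by rewrite eq_sym h2.
have := adj_cases n2 hi hj ha; rewrite hB andbF /= => /negbTE hA.
by rewrite (congr_next h2') eq_sym hA.
Qed.

Lemma DDD1 n i j : vcomp (vcomp (DF n i) (DF n j)) (DF n i) = vcomp (vcomp (DF n i) (DF n i)) (DF n j).
Proof. by apply: functional_extensionality => t; rewrite /vcomp /DF; congr Some; congr (_, _); ring. Qed.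

Lemma DDD2 n i j : vcomp (vcomp (DF n j) (DF n i)) (DF n i) = vcomp (vcomp (DF n i) (DF n i)) (DF n j).
Proof. by apply: functional_extensionality => t; rewrite /vcomp /DF; congr Some; congr (_, _); ring. Qed.

Lemma dF_same n i : (1 < n)%N -> (i < n)%N -> dFc n i i = v^-1 /\ dFn n i i = v.
Proof.
move=> n1 hi; rewrite /dFc /dFn eqxx (neqmodS1 n1 hi) (neqmodS2 n1 hi).
by split; rewrite ?mulr1 ?mul1r.
Qed.

Lemma dF_dirA n i j : (i %% n == j.+1 %% n)%N -> ~~ (j %% n == i.+1 %% n)%N -> i != j ->
  [/\ dFc n j i = v, dFn n j i = 1, dFc n i j = 1 & dFn n i j = v^-1].
Proof.
move=> hA hB hij; have hji : (j == i) = false by rewrite eq_sym (negbTE hij).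
rewrite /dFc /dFn (negbTE hij) hji.
rewrite hA (negbTE hB) [(i.+1 %% n == _)%N]eq_sym (negbTE hB) [(j.+1 %% n == _)%N]eq_sym hA.
by split; rewrite ?mulr1 ?mul1r.
Qed.


Lemma SerreF n i j : (2 < n)%N -> (i < n)%N -> (j < n)%N -> adj n i j ->
  forall t s, cf (SerreOp (Fop n i) (Fop n j)) t s = 0.
Proof.
move=> n2 hi hj ha; have n1 : (1 < n)%N by lia.
have hji := adj_sym ha.
have hij : i != j.
  by apply/eqP => e; move: ha; rewrite /adj e !modS_small //; case: ifP => ?; lia.
elim => [|t s' IH] s; first by apply: SerreOp_nilF.
set W3 := vcomp (vcomp (DF n i) (DF n i)) (DF n j).
suff -> : cf (SerreOp (Fop n i) (Fop n j)) (t :: s') s =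
          cf (tens W3 (SerreOp (Fop n i) (Fop n j))) (t :: s') s.
  by rewrite (@cf_tens_congr _ _ op0) ?tens_op0 ?cf_op0 // => u; rewrite IH cf_op0.
set R := cf (tens W3 _) _ _.
rewrite /SerreOp /opsub !opprod3.
rewrite [Fop n i]Fop_dec [Fop n j]Fop_dec; expand.
rewrite !tens_comp !opcomp_id !opid_comp !vcompA.
repeat first [ rewrite (cF_DF_l _ hi hi) | rewrite (cF_DF_l _ hi hj) | rewrite (cF_DF_l _ hj hi)
  | rewrite (cF_DF_l _ hj hj) | rewrite (DF_cF_l _ hi hi) | rewrite (DF_cF_l _ hi hj)
  | rewrite (DF_cF_l _ hj hi) | rewrite (DF_cF_l _ hj hj)
  | rewrite (cF_DF hi hi) | rewrite (cF_DF hi hj) | rewrite (cF_DF hj hi) | rewrite (cF_DF hj hj)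
  | rewrite (DF_cF hi hi) | rewrite (DF_cF hi hj) | rewrite (DF_cF hj hi) | rewrite (DF_cF hj hj)
  | rewrite vcomp_vscale_l | rewrite vcomp_vscale_r | rewrite vscale_vscale
  | rewrite (cF_cF n1 hi) | rewrite (cF_cF n1 hj) | rewrite (cF_cF_l _ n1 hi) | rewrite (cF_cF_l _ n1 hj)
  | rewrite (cF_cFcF n2 hi hj ha) | rewrite (cF_cFcF n2 hj hi hji)
  | rewrite DDD1 | rewrite DDD2 | rewrite vcomp_nonel | rewrite vcomp_noner | rewrite vscale_none ].
repeat erewrite tens_vscale; repeat erewrite tens_none; repeat erewrite cf_scale;
  repeat erewrite cf_op0.
rewrite /R /SerreOp /opsub !opprod3.
repeat erewrite <- tens_add; repeat erewrite tens_scale; repeat erewrite cf_add;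
  repeat erewrite cf_scale.
have hv := mulfV v_neq0.
have [e1 e2] := dF_same n1 hi; have [e3 e4] := dF_same n1 hj.
rewrite e1 e2.
case/orP: (adj_cases n2 hi hj ha) => /andP [hA hB].
  have [f1 f2 f3 f4] := dF_dirA hA hB hij.
  rewrite f1 f2 f3 f4 (cF_cF_dir hj hi hB) ?vscale_none tens_none cf_op0.
  ring: hv.
have hji' : j != i by rewrite eq_sym.
have [f1 f2 f3 f4] := dF_dirA hA hB hji'.
rewrite f1 f2 f3 f4 (cF_cF_dir hi hj hB) ?vscale_none tens_none cf_op0.
ring: hv.
Qed.

Transparent opscale opcomp opadd op0 tens Kt Eop Fop.


Lemma opeq_of_eq r A B : A = B -> opeq r A B.
Proof. by move=> ->. Qed.

Lemma opeq_of_cf r A B : (forall t s, cf A t s = cf B t s) -> opeq r A B.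
Proof. by move=> h t _ s; exact: h. Qed.

Lemma opeq0_of_cf r A : (forall t s, cf A t s = 0) -> opeq r A op0.
Proof. by move=> h t _ s; rewrite -/(cf A t s) h -/(cf op0 t s) cf_op0. Qed.

Theorem proposition1p6p5 (n r : nat) :
  (3 <= r)%N -> (r < n)%N ->
  T_extra_relations_hold n r (Kop n)
  /\
  (U_relations_hold n r (Eop n) (Fop n) (Kop n) (Kiop n)
   /\ T_extra_relations_hold n r (Kop n)).
Proof.
move=> r3 rn.
have n2 : (2 < n)%N by lia.
have n0 : (0 < n)%N by lia.
have hT : T_extra_relations_hold n r (Kop n).
  by split; [exact: extra_rel1 | move=> i; exact: extra_rel2].
split=> //; split=> //.
move=> i j; have hi := ltn_ord i; have hj := ltn_ord j.
split; first exact/opeq_of_eq/Q1.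
split; first exact/opeq_of_eq/Q2a.
split; first exact/opeq_of_eq/Q2b.
split; first exact/opeq_of_eq/(Kop_E_comm n2 hi hj).
split; first exact/opeq_of_eq/(Kop_F_comm n2 hi hj).
split.
  apply: opeq_of_cf => t s; have := Q5gen n2 hi hj t s.
  by rewrite /Q5rhs.
split.
  move=> ha; case: (eqVneq i j) => [<-|hij]; first by split; apply: opeq_of_eq.
  have hij' : (nat_of_ord i != nat_of_ord j) by [].
  split; apply: opeq_of_cf.
    exact: Q6E n2 hi hj hij' ha.
  exact: Q7F n2 hi hj hij' ha.
move=> ha; split; apply: opeq0_of_cf.
  exact: SerreE n2 hi hj ha.
exact: SerreF n2 hi hj ha.
Qed.
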